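(* Let $G$ be a finitely generated, torsion-free, $2$-step nilpotent group with Malcev basis $(A;C)=(a_1,\dots,a_n;c_1,\dots,c_m)$, $n\ge2$, $m\ge1$, and let $\lambda_t^{ij}$, $\alpha_i$, $\gamma_t$, $c(x)$ and $M_\ell$ be as in the context. Suppose $\mathrm{rank}(M_\ell)=n-1$ for some $\ell\in\{1,\dots,n\}$. Then for $x\in G$, $[a_\ell,x]=1$ if and only if $x=a_\ell^{\alpha_\ell(x)}c(x)$. If, additionally, $\lambda_t^{\ell k}\neq0$ for some $t$ and some $k\neq\ell$, then $Z(G)=\langle C\rangle$ and $a_\ell$ is c-small.
   Context: Commutators: $[g,h]=g^{-1}h^{-1}gh$. A Malcev basis is a pair $(A;C)$ with $C$ a basis of a free abelian subgroup with $G'\le\langle C\rangle\le Z(G)$ and $A$ such that $G/\langle C\rangle$ is free abelian with basis $\{a_i\langle C\rangle\}$. Every $x\in G$ is then uniquely $x=\prod_{i=1}^n a_i^{\alpha_i(x)}c(x)$ with $c(x)=\prod_{j=1}^m c_j^{\gamma_j(x)}$, $\alpha_i(x),\gamma_j(x)\in\mathbb{Z}$. Define integers $\lambda_t^{ij}$ ($1\le i,j\le n$) by $[a_i,a_j]=\prod_{t=1}^m c_t^{\lambda_t^{ij}}$ (so $\lambda_t^{ij}=-\lambda_t^{ji}$, $\lambda_t^{ii}=0$). $M_\ell$ is the $m\times(n-1)$ integer matrix whose $t$-th row is $(-\lambda_t^{1\ell},\dots,-\lambda_t^{\ell-1,\ell},\lambda_t^{\ell,\ell+1},\dots,\lambda_t^{\ell,n})$;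 its rank is its maximal number of linearly independent rows. An element $g$ is c-small if its centralizer equals $\{g^tz\mid t\in\mathbb{Z},z\in Z(G)\}$. *)

(* Defs.v *)
From HB Require Import structures.
From mathcomp Require Import all_boot all_order all_algebra.
Set Implicit Arguments. Unset Strict Implicit. Unset Printing Implicit Defensive.
Import GRing.Theory Num.Theory.

Record group := Group {
  gcarrier :> Type;
  gmul : gcarrier -> gcarrier -> gcarrier;
  ginv : gcarrier -> gcarrier;
  gone : gcarrier;
  gmulA : forall x y z, gmul x (gmul y z) = gmul (gmul x y) z;
  gmul1 : forall x, gmul gone x = x;
  gmulV : forall x, gmul (ginv x) x = gone
}.

Section Defs.
Variable G : group.
Local Notation "x * y" := (gmul x y).
Local Notation "x ^-1" := (ginv x).
Local Notation "1" := (gone G).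

Definition gpown (g : G) (k : nat) : G := iter k (gmul g) 1.
Definition gpowz (g : G) (z : int) : G :=
  match z with Posz k => gpown g k | Negz k => (gpown g k.+1)^-1 end.

Definition comm (g h : G) : G := g^-1 * (h^-1 * (g * h)).

Definition central (z : G) : Prop := forall g : G, z * g = g * z.

Inductive gen (S : G -> Prop) : G -> Prop :=
| gen_base x : S x -> gen S x
| gen_one : gen S 1
| gen_mul x y : gen S x -> gen S y -> gen S (x * y)
| gen_inv x : gen S x -> gen S (x^-1).

Definition gprod k (F : 'I_k -> G) : G := \big[@gmul G/1]_(i < k) F i.

Definition finitely_generated : Prop :=
  exists k (f : 'I_k -> G), forall x, gen (fun y => exists i, y = f i) x.

Definition torsion_free : Prop :=
  forall (g : G) (k : nat), (0 < k)%N -> gpown g k = 1 -> g = 1.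

Definition two_step_nilpotent : Prop :=
  (forall x y, central (comm x y)) /\ (exists x y, comm x y <> 1).

Definition range_pred k (c : 'I_k -> G) : G -> Prop := fun y => exists j, y = c j.

Definition subC m (C : 'I_m -> G) : G -> Prop := gen (range_pred C).

Definition free_abelian_basis m (C : 'I_m -> G) : Prop :=
  (forall j j', C j * C j' = C j' * C j) /\
  (forall g : 'I_m -> int, gprod (fun j => gpowz (C j) (g j)) = 1 -> forall j, g j = 0%R).

Definition malcev_basis n m (A : 'I_n -> G) (C : 'I_m -> G) : Prop :=
  [/\ free_abelian_basis C,
      (forall x, gen (fun y => exists g h, y = comm g h) x -> subC C x),
      (forall x, subC C x -> central x),
      (* the cosets a_i<C> span G/<C> (abelian since G' <= <C>) *)
      (forall x, exists al : 'I_n -> int,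
          subC C ((gprod (fun i => gpowz (A i) (al i)))^-1 * x)) &
      (* and are Z-linearly independent in G/<C> *)
      (forall al : 'I_n -> int,
          subC C (gprod (fun i => gpowz (A i) (al i))) -> forall i, al i = 0%R)].

Definition c_small (g : G) : Prop :=
  forall y, y * g = g * y <-> exists (t : int) (z : G), central z /\ y = gpowz g t * z.

End Defs.

(* The matrix M_l (m x (n-1)); column j corresponds to k = lift l j, i.e. the
   indices 1..l-1,l+1..n in order; entry -lam_t^{k l} if k < l, lam_t^{l k} if k > l. *)
Definition Mmat n m (lam : 'I_n -> 'I_n -> 'I_m -> int) (l : 'I_n) : 'M[int]_(m, n.-1) :=
  \matrix_(t < m, j < n.-1)
    let k := lift l j in
    if (k < l)%N then (- lam k l t)%R else lam l k t.

Definition int_rank m p (M : 'M[int]_(m, p)) : nat := \rank (map_mx (intr : int -> rat) M).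

(* Main.v *)
Require Import Defs.
From HB Require Import structures.
From mathcomp Require Import all_boot all_order all_algebra zify.
Import GRing.Theory Num.Theory.

Module Aux.
Set Implicit Arguments. Unset Strict Implicit.
Section Basic.
Variable G : group.
Local Notation "x ** y" := (@gmul G x y) (at level 40, left associativity).
Local Notation e := (gone G).
Local Notation inv := (@ginv G).

Lemma gmulVr (x : G) : x ** inv x = e.
Proof.
have uu : (x ** inv x) ** (x ** inv x) = x ** inv x.
  by rewrite -gmulA (gmulA (inv x)) gmulV gmul1.
have := congr1 (gmul (inv (x ** inv x))) uu.
by rewrite gmulA !gmulV gmul1.
Qed.

Lemma gmul1r (x : G) : x ** e = x.
Proof. by rewrite -(gmulV x) gmulA gmulVr gmul1. Qed.

Lemma gmulKg (x y : G) : inv x ** (x ** y) = y.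
Proof. by rewrite gmulA gmulV gmul1. Qed.

Lemma gmulKVg (x y : G) : x ** (inv x ** y) = y.
Proof. by rewrite gmulA gmulVr gmul1. Qed.

Lemma gmulI (x y z : G) : x ** y = x ** z -> y = z.
Proof. by move=> H; rewrite -(gmulKg x y) H gmulKg. Qed.

Lemma gmulIg (x y z : G) : y ** x = z ** x -> y = z.
Proof.
move=> H; rewrite -(gmul1r y) -(gmul1r z) -(gmulVr x) !gmulA H //.
Qed.

Lemma ginv_uniq (x y : G) : x ** y = e -> inv x = y.
Proof. by move=> H; apply: (gmulI (x:=x)); rewrite gmulVr H. Qed.

Lemma ginvK (x : G) : inv (inv x) = x.
Proof. by apply: ginv_uniq; rewrite gmulV. Qed.

Lemma ginvM (x y : G) : inv (x ** y) = inv y ** inv x.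
Proof. by apply: ginv_uniq; rewrite -gmulA gmulKVg gmulVr. Qed.

Lemma ginv1 : inv e = e.
Proof. by apply: ginv_uniq; rewrite gmul1. Qed.

Lemma central_mul (x y : G) : central x -> central y -> central (x ** y).
Proof. by move=> cx cy g; rewrite -gmulA cy gmulA cx gmulA. Qed.

Lemma central_inv (x : G) : central x -> central (inv x).
Proof.
move=> cx g; apply: (gmulI (x:=x)); rewrite gmulKVg gmulA cx -gmulA gmulVr gmul1r //.
Qed.

Lemma central_comm (x g : G) : central x -> comm g x = e.
Proof. by move=> cx; rewrite /comm -cx gmulKg gmulV. Qed.

Lemma comm1P (g h : G) : comm g h = e <-> g ** h = h ** g.
Proof.
rewrite /comm; split=> H.
  have H1 : inv h ** (g ** h) = g by rewrite -[RHS]gmul1r -H gmulKVg.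
  by rewrite -{1}(gmulKVg h (g ** h)) H1.
by rewrite H gmulKg gmulV.
Qed.

Lemma comm1r (g : G) : comm g e = e.
Proof. by rewrite /comm ginv1 gmul1 gmul1r gmulV. Qed.

Lemma gcommM (g x y : G) : (forall a b : G, central (comm a b)) ->
  comm g (x ** y) = comm g x ** comm g y.
Proof.
move=> Hc.
have Hx : inv x ** (g ** x) = g ** comm g x by rewrite /comm gmulKVg.
have H2 : inv x ** (g ** (x ** y)) = g ** (y ** comm g x).
  by rewrite (gmulA g x y) (gmulA (inv x)) Hx -gmulA (Hc g x y).
rewrite /comm ginvM -(gmulA (inv y)) H2 -/(comm g x).
rewrite (Hc g x).
by rewrite (gmulA g y) (gmulA (inv y)) (gmulA (inv g)).
Qed.

End Basic.
Section Pow.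
Variable G : group.
Local Notation "x ** y" := (@gmul G x y) (at level 40, left associativity).
Local Notation e := (gone G).
Local Notation inv := (@ginv G).
Local Open Scope ring_scope.

Lemma gpownSr (g : G) k : gpown g k.+1 = gpown g k ** g.
Proof.
elim: k => [|j IHj]; first by rewrite /gpown /= gmul1r gmul1.
change (g ** gpown g j.+1 = gpown g j.+1 ** g).
by rewrite {1}IHj gmulA.
Qed.
Lemma gpowzS (g : G) (z : int) : gpowz g (z + 1) = gpowz g z ** g.
Proof.
case: z => k.
  have -> : (Posz k + 1) = Posz k.+1 by lia.
  exact: gpownSr.
case: k => [|k].
  have -> : (Negz 0 + 1) = 0 by [].
  by rewrite /= /gpown /= gmul1r gmulV.
have -> : (Negz k.+1 + 1) = Negz k by rewrite !NegzE; lia.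
change (inv (gpown g k.+1) = inv (g ** gpown g k.+1) ** g).
by rewrite ginvM -gmulA gmulV gmul1r.
Qed.

Lemma int_uniq (f h : int -> G) (x : G) : f 0 = h 0 ->
  (forall z, f (z + 1) = f z ** x) -> (forall z, h (z + 1) = h z ** x) ->
  forall z, f z = h z.
Proof.
move=> H0 Hf Hh.
have Hp : forall k : nat, f k = h k.
  elim=> [//|k IH]; have -> : Posz k.+1 = Posz k + 1 by lia.
  by rewrite Hf Hh IH.
have Hn : forall k : nat, f (- Posz k) = h (- Posz k).
  elim=> [|k IH]; first by have := Hp 0%N.
  apply: (gmulIg (x:=x)); rewrite -Hf -Hh.
  have -> : - Posz k.+1 + 1 = - Posz k by lia.
  exact: IH.
case=> k; first exact: Hp.
by rewrite NegzE Hn.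
Qed.

Lemma gpowzD (g : G) (a b : int) : gpowz g (a + b) = gpowz g a ** gpowz g b.
Proof.
move: b; apply: (int_uniq (x := g)).
- by rewrite addr0 /= /gpown /= gmul1r.
- by move=> z; rewrite addrA gpowzS.
- by move=> z; rewrite gpowzS gmulA.
Qed.

Lemma gpowz1 (g : G) : gpowz g 1 = g.
Proof. by rewrite /= /gpown /= gmul1r. Qed.

Lemma gpowz0 (g : G) : gpowz g 0 = e.
Proof. by []. Qed.

Lemma gen_gpowz (S : G -> Prop) (g : G) (z : int) : gen S g -> gen S (gpowz g z).
Proof.
move=> Hg.
have Hn : forall k, gen S (gpown g k).
  elim=> [|k IH]; first exact: gen_one.
  by rewrite /gpown iterS; apply: gen_mul.
case: z => k /=; first exact: Hn.
exact: (gen_inv (Hn k.+1)).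
Qed.

End Pow.
Section BigG.
Variable G : group.
Local Notation "x ** y" := (@gmul G x y) (at level 40, left associativity).
Local Notation e := (gone G).

Lemma big_e (I : Type) (r : seq I) (P : pred I) (F : I -> G) :
  (forall i, P i -> F i = e) -> \big[@gmul G/e]_(i <- r | P i) F i = e.
Proof.
move=> H; elim: r => [|a r IH]; first by rewrite big_nil.
rewrite big_cons; case: ifP => Pa //; by rewrite IH H // gmul1.
Qed.

Lemma big_central (I : Type) (r : seq I) (P : pred I) (F : I -> G) :
  (forall i, central (F i)) -> central (\big[@gmul G/e]_(i <- r | P i) F i).
Proof.
move=> H; apply: (big_ind (fun x : G => central x)) => //.
- by move=> g; rewrite gmul1 gmul1r.
- by move=> x y; apply: central_mul.
Qed.

Lemma big_split_c (I : Type) (r : seq I) (P : pred I) (F H : I -> G) :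
  (forall i, central (H i)) ->
  \big[@gmul G/e]_(i <- r | P i) (F i ** H i) =
  \big[@gmul G/e]_(i <- r | P i) F i ** \big[@gmul G/e]_(i <- r | P i) H i.
Proof.
move=> cH; elim: r => [|a r IH]; first by rewrite !big_nil gmul1.
rewrite !big_cons; case: ifP => Pa //.
rewrite IH -!gmulA; congr (_ ** _).
rewrite !gmulA; congr (_ ** _).
exact: cH.
Qed.

Lemma big_single (I : eqType) (r : seq I) (F : I -> G) (l : I) :
  uniq r -> l \in r -> (forall i, i != l -> F i = e) ->
  \big[@gmul G/e]_(i <- r) F i = F l.
Proof.
move=> + + H; elim: r => [//|a r IH] /= /andP[ar ur].
rewrite in_cons big_cons; case: eqP => [la _|/eqP al] /=.
  rewrite -la big_seq big_e ?gmul1r // => i ir; apply: H.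
  by apply/eqP=> il; move: ar; rewrite -la -il ir.
by move=> lr; rewrite H 1?eq_sym // gmul1 IH.
Qed.

End BigG.
Section Core.
Variable G : group.
Local Notation "x ** y" := (@gmul G x y) (at level 40, left associativity).
Local Notation e := (gone G).
Local Notation inv := (@ginv G).
Variables (n m : nat) (A : 'I_n -> G) (C : 'I_m -> G) (lam : 'I_n -> 'I_n -> 'I_m -> int).
Hypothesis Hnil : forall a b : G, central (comm a b).
Hypothesis Hmal : malcev_basis A C.
Hypothesis Hlam : forall i j, comm (A i) (A j) = gprod (fun t => gpowz (C t) (lam i j t)).
Local Open Scope ring_scope.

Definition E (u : 'I_m -> int) : G := gprod (fun t => gpowz (C t) (u t)).

Lemma subC_E u : subC C (E u).
Proof.
apply: (big_ind (subC C)); first exact: gen_one.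
- by move=> x y; apply: gen_mul.
- by move=> t _; apply: gen_gpowz; apply: gen_base; exists t.
Qed.

Lemma centralC x : subC C x -> central x.
Proof. by case: Hmal => _ _ H _ _; apply: H. Qed.

Lemma central_E u : central (E u).
Proof. exact/centralC/subC_E. Qed.

Lemma E_ext u v : u =1 v -> E u = E v.
Proof. by move=> H; apply: eq_bigr => t _; rewrite H. Qed.

Lemma E0 : E (fun _ => 0) = e.
Proof. by apply: big_e. Qed.

Lemma E_add u v : E (fun t => u t + v t) = E u ** E v.
Proof.
rewrite /E /gprod -big_split_c.
  by apply: eq_bigr => t _; rewrite gpowzD.
move=> t; apply: centralC; apply: gen_gpowz; apply: gen_base; exists t => //.
Qed.

Lemma E_free u : E u = e -> forall t, u t = 0.
Proof. by case: Hmal => [[_ H] _ _ _ _]; apply: H. Qed.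

Lemma E_sum (I : Type) (r : seq I) (P : pred I) (w : I -> 'I_m -> int) :
  E (fun t => \sum_(i <- r | P i) w i t) = \big[@gmul G/e]_(i <- r | P i) E (w i).
Proof.
elim: r => [|a r IH].
  by rewrite big_nil -E0; apply: E_ext => t; rewrite big_nil.
rewrite big_cons -IH; case: ifP => Pa.
  by rewrite -E_add; apply: E_ext => t; rewrite big_cons Pa.
by apply: E_ext => t; rewrite big_cons Pa.
Qed.

Lemma comm_pow l i (k : int) :
  comm (A l) (gpowz (A i) k) = E (fun t => k * lam l i t).
Proof.
move: k; apply: (int_uniq (x := E (lam l i))).
- by rewrite comm1r -E0; apply: E_ext => t; rewrite mul0r.
- by move=> z; rewrite gpowzS gcommM // Hlam.
- move=> z; rewrite -E_add; apply: E_ext => t; rewrite mulrDl mul1r //.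
Qed.

Lemma comm_P l (al : 'I_n -> int) :
  comm (A l) (gprod (fun i => gpowz (A i) (al i))) =
  E (fun t => \sum_(i < n) al i * lam l i t).
Proof.
rewrite E_sum /gprod (big_morph (comm (A l)) (fun x y => gcommM (A l) x y Hnil) (comm1r (A l))).
by apply: eq_bigr => i _; rewrite comm_pow.
Qed.

Lemma lam_diag i t : lam i i t = 0.
Proof.
apply: E_free; rewrite /E -Hlam; exact/comm1P.
Qed.

Lemma comm_inv (a b : G) : inv (comm a b) = comm b a.
Proof.
by rewrite /comm !ginvM !ginvK !gmulA.
Qed.

Lemma lam_anti k i t : lam k i t = - lam i k t.
Proof.
apply/eqP; rewrite -addr_eq0; apply/eqP; move: t; apply: E_free.
rewrite E_add /E -!Hlam -comm_inv; first [exact: gmulVr | exact: gmulV].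
Qed.

End Core.
Local Open Scope ring_scope.
Lemma lin_alg (G : group) n m (A : 'I_n -> G) (C : 'I_m -> G) lam (l : 'I_n) (al : 'I_n -> int) :
  malcev_basis A C ->
  (forall i j, comm (A i) (A j) = gprod (fun t => gpowz (C t) (lam i j t))) ->
  int_rank (Mmat lam l) = n.-1 ->
  (forall t, \sum_(i < n) al i * lam l i t = 0) -> forall i, i != l -> al i = 0.
Proof.
move=> Hmal Hlam Hr Hw i il.
have li : l != i by rewrite eq_sym.
have [j -> _] := unlift_some li.
pose M' := map_mx (intr : int -> rat) (Mmat lam l).
pose v := \col_(j' < n.-1) ((al (lift l j'))%:~R : rat).
have Mv : M' *m v = 0.
  apply/matrixP => t z; rewrite !mxE.
  have := Hw t; rewrite (bigD1_ord l) //= (lam_diag Hmal Hlam) mulr0 add0r => Hs.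
  have Hs' := congr1 (intr : int -> rat) Hs; rewrite rmorph_sum rmorph0 /= in Hs'.
  apply: (etrans _ Hs').
  apply: eq_bigr => j' _; rewrite !mxE rmorphM /= mulrC; congr (_ * _).
  case: ifP => _ //; rewrite (lam_anti Hmal Hlam) opprK //.
have rf : row_free M'^T.
  by rewrite /row_free mxrank_tr; apply/eqP; exact: Hr.
have vT0 : v^T = 0.
  apply: (row_free_inj rf); rewrite /= -trmx_mul Mv trmx0 mul0mx //.
have := congr1 (fun X : 'M[rat]_(1, n.-1) => X 0 j) vT0; rewrite !mxE => /eqP.
by rewrite intr_eq0 => /eqP.
Qed.
End Aux.
Import Aux.

Theorem proposition3p7 (G : group) (n m : nat)
  (A : 'I_n -> G) (C : 'I_m -> G) (lam : 'I_n -> 'I_n -> 'I_m -> int) (l : 'I_n) :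
  finitely_generated G -> torsion_free G -> two_step_nilpotent G ->
  malcev_basis A C -> (2 <= n)%N -> (1 <= m)%N ->
  (forall i j, comm (A i) (A j) = gprod (fun t => gpowz (C t) (lam i j t))) ->
  int_rank (Mmat lam l) = n.-1 ->
  (forall (x : G) (al : 'I_n -> int) (ga : 'I_m -> int),
      x = gmul (gprod (fun i => gpowz (A i) (al i))) (gprod (fun t => gpowz (C t) (ga t))) ->
      (comm (A l) x = gone G <->
       x = gmul (gpowz (A l) (al l)) (gprod (fun t => gpowz (C t) (ga t))))) /\
  ((exists (t : 'I_m) (k : 'I_n), k <> l /\ lam l k t <> 0%R) ->
     (forall z : G, central z <-> subC C z) /\ c_small (A l)).
Proof.
move=> _ _ [Hnil _] Hmal _ _ Hlam Hr.
have core : forall (al : 'I_n -> int) y, central y ->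
    comm (A l) (gmul (gprod (fun i => gpowz (A i) (al i))) y) = gone G ->
    gprod (fun i => gpowz (A i) (al i)) = gpowz (A l) (al l).
  move=> al y cy.
  rewrite gcommM // (central_comm _ cy) gmul1r (comm_P Hnil Hmal Hlam) => /(E_free Hmal) Hw.
  have H0 := lin_alg Hmal Hlam Hr Hw.
  rewrite /gprod (big_single (F := fun i => gpowz (A i) (al i)) (l := l)) //.
  - exact: index_enum_uniq.
  - exact: mem_index_enum.
  - by move=> i il; rewrite H0.
have cpow : forall k, comm (A l) (gpowz (A l) k) = gone G.
  move=> k; rewrite (comm_pow Hnil Hmal Hlam) -(E0 C); apply: E_ext => t.
  by rewrite (lam_diag Hmal Hlam) GRing.mulr0.
split.
  move=> x al ga ->; split.
    by move=> Hc; rewrite (core al _ (central_E Hmal ga) Hc).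
  move=> ->; rewrite gcommM // (central_comm _ (central_E Hmal ga)) gmul1r; exact: cpow.
move=> [t0 [k0 [Hk0 Hne]]].
have Hne' : lam l k0 t0 != 0%R by apply/eqP.
have decomp : forall z : G, exists al : 'I_n -> int,
    subC C (gmul (ginv (gprod (fun i => gpowz (A i) (al i)))) z).
  by case: Hmal => _ _ _ Hdec _.
split.
  move=> z; split; last exact: (centralC Hmal).
  move=> cz; have [al Hy] := decomp z.
  set P := gprod _ in Hy; set y := gmul (ginv P) z in Hy.
  have zP : z = gmul P y by rewrite /y gmulKVg.
  have cy := (centralC Hmal Hy).
  have HP : P = gpowz (A l) (al l).
    by apply: (core al y cy); rewrite -zP; exact: central_comm.
  have := central_comm (A k0) cz.
  rewrite zP HP gcommM // (central_comm _ cy) gmul1r (comm_pow Hnil Hmal Hlam).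
  move=> /(E_free Hmal) /(_ t0).
  rewrite (lam_anti Hmal Hlam) => /eqP; rewrite GRing.mulf_eq0 GRing.oppr_eq0 (negbTE Hne') orbF.
  by move=> /eqP a0; rewrite a0 gpowz0 gmul1.
move=> y; split.
  move=> Hyl.
  have Hc : comm (A l) y = gone G by apply/comm1P.
  have [al Hy] := decomp y.
  set P := gprod _ in Hy; set y' := gmul (ginv P) y in Hy.
  have yP : y = gmul P y' by rewrite /y' gmulKVg.
  have cy := (centralC Hmal Hy).
  have HP : P = gpowz (A l) (al l) by apply: (core al y' cy); rewrite -yP.
  by exists (al l), y'; split => //; rewrite -HP.
move=> [t [z [cz ->]]].
have hc : gmul (A l) (gpowz (A l) t) = gmul (gpowz (A l) t) (A l) by apply/comm1P; exact: cpow.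
by rewrite -gmulA (cz (A l)) gmulA -hc gmulA.
Qed.
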